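(* Let $a_1\ge1$ be an integer, let $\bm{x} \in \mathcal{L}(f)$ with $x_0 = 1$, let $p$ be a prime not dividing $D$, let $\mathfrak{p}$ be a prime ideal of $\mathcal{O}_K$ lying over $p$, let $v \ge 1$ be an integer, let $n := \operatorname{ord}_{\mathfrak{p}}(\alpha^2)$, and let $s,t$ be integers with $0 \le s < t < 2n$ and $s \equiv t \pmod 2$. Put $z_{s,t} := (-1)^{t+1}\alpha^{-(s+t)}\in\mathcal{O}_K$. Then $x_s \equiv x_t \pmod{p^v}$ if and only if $1 - z_{s,t}$ is invertible modulo $\mathfrak{p}^v$ and $x_1 \equiv (\beta - \alpha z_{s,t})(1 - z_{s,t})^{-1} \pmod{\mathfrak{p}^v}$, where $(1-z_{s,t})^{-1}$ denotes an inverse of $1-z_{s,t}$ modulo $\mathfrak{p}^v$.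
   Context: Let $f := X^2 - a_1X - 1$, $D := a_1^2+4$, $K := \mathbb{Q}(\sqrt{D})$ with ring of integers $\mathcal{O}_K$, and $\alpha,\beta\in\mathcal{O}_K$ the roots of $f$ ($\alpha\beta=-1$, so $\alpha$ is a unit). $\mathcal{L}(f)$ is the set of integer sequences $\bm{x}=(x_n)_{n\ge0}$ with $x_{n+2} = a_1x_{n+1} + x_n$ for all $n\ge0$. $\operatorname{ord}_{\mathfrak{p}}(\theta)$ is the multiplicative order of $\theta$ modulo the ideal $\mathfrak{p}$. *)

(* Defs.v *)
(* K = Q(sqrt D) realised inside algC. *)
From HB Require Import structures.
From mathcomp Require Import all_boot all_order all_algebra all_field.
Set Implicit Arguments. Unset Strict Implicit. Unset Printing Implicit Defensive.
Import Order.TTheory GRing.Theory Num.Theory.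
Local Open Scope ring_scope.

Definition discr (a1 : nat) : nat := (a1 ^ 2 + 4)%N.

Definition fpoly (a1 : nat) : {poly algC} := 'X^2 - (a1%:R)%:P * 'X - 1.

Definition inK (D : nat) (x : algC) : Prop :=
  exists q r : rat, x = ratr q + ratr r * sqrtC (D%:R).

Definition inOK (D : nat) (x : algC) : Prop := inK D x /\ x \in Aint.

Definition is_ideal (D : nat) (P : algC -> Prop) : Prop :=
  [/\ (forall x, P x -> inOK D x), P 0,
      (forall x y, P x -> P y -> P (x + y)) &
      (forall a x, inOK D a -> P x -> P (a * x))].

Definition is_prime_ideal (D : nat) (P : algC -> Prop) : Prop :=
  [/\ is_ideal D P, ~ P 1 &
      (forall a b, inOK D a -> inOK D b -> P (a * b) -> P a \/ P b)].

Definition lies_over (P : algC -> Prop) (p : nat) : Prop := P (p%:R).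

Fixpoint ideal_pow (D : nat) (P : algC -> Prop) (v : nat) : algC -> Prop :=
  match v with
  | 0 => inOK D
  | v'.+1 => fun x => exists r : seq (algC * algC),
       (forall u, u \in r -> P u.1 /\ ideal_pow D P v' u.2) /\
       x = \sum_(u <- r) u.1 * u.2
  end.

Definition congr_mod (I : algC -> Prop) (x y : algC) : Prop := I (x - y).

Definition is_ord_mod (P : algC -> Prop) (theta : algC) (n : nat) : Prop :=
  (0 < n)%N /\ congr_mod P (theta ^+ n) 1 /\
  (forall m, (0 < m < n)%N -> ~ congr_mod P (theta ^+ m) 1).

Definition in_Lf (a1 : nat) (x : nat -> int) : Prop :=
  forall n, x n.+2 = a1%:Z * x n.+1 + x n.

(* Main.v *)
Require Import Defs.
From HB Require Import structures.
From mathcomp Require Import all_boot all_order all_algebra all_field.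
From mathcomp Require Import ring zify.
From Stdlib Require Import Classical.
Import Order.TTheory GRing.Theory Num.Theory.
Local Open Scope ring_scope.
Set Warnings "-notation-overridden,-ambiguous-paths".
Set Implicit Arguments. Unset Strict Implicit.
Lemma root_f a1 (y : algC) : root (fpoly a1) y -> y ^+ 2 = a1%:R * y + 1.
Proof.
rewrite /root /fpoly !hornerE => /eqP H.
by apply/eqP; rewrite -subr_eq0 -H; apply/eqP; ring.
Qed.

Lemma roots_ab a1 (a b : algC) : root (fpoly a1) a -> root (fpoly a1) b -> a != b ->
  a + b = a1%:R /\ a * b = -1.
Proof.
move=> /root_f Ha /root_f Hb nab.
have Hs : a + b = a1%:R.
  have : (a - b) * (a + b - a1%:R) = 0.
    have -> : (a - b) * (a + b - a1%:R) = (a ^+ 2 - a1%:R * a - 1) - (b ^+ 2 - a1%:R * b - 1) by ring.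
    by rewrite Ha Hb; ring.
  move/eqP; rewrite mulf_eq0 subr_eq0 (negbTE nab) /= subr_eq0 => /eqP //.
split=> //.
have -> : b = a1%:R - a by rewrite -Hs; ring.
have -> : a * (a1%:R - a) = - (a ^+ 2 - a1%:R * a) by ring.
by rewrite Ha; ring.
Qed.
Lemma inK_add D x y : inK D x -> inK D y -> inK D (x + y).
Proof.
move=> [q1 [r1 ->]] [q2 [r2 ->]]; exists (q1 + q2), (r1 + r2).
rewrite !rmorphD /=; ring.
Qed.

Lemma inK_mul D x y : inK D x -> inK D y -> inK D (x * y).
Proof.
move=> [q1 [r1 ->]] [q2 [r2 ->]]; exists (q1 * q2 + r1 * r2 * D%:R), (q1 * r2 + r1 * q2).
rewrite !rmorphD !rmorphM /= rmorph_nat.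
have H := sqrtCK (D%:R : algC).
set sd := sqrtC _ in H *; rewrite -H; ring.
Qed.

Lemma inK_int D (m : int) : inK D m%:~R.
Proof. by exists m%:~R, 0; rewrite rmorph0 mul0r addr0 rmorph_int. Qed.

Lemma inK_sqrt D : inK D (sqrtC D%:R).
Proof. by exists 0, 1; rewrite rmorph0 rmorph1 add0r mul1r. Qed.

Lemma OK_add D x y : inOK D x -> inOK D y -> inOK D (x + y).
Proof. by move=> [? ?] [? ?]; split; [apply: inK_add | apply: rpredD]. Qed.
Lemma OK_mul D x y : inOK D x -> inOK D y -> inOK D (x * y).
Proof. by move=> [? ?] [? ?]; split; [apply: inK_mul | apply: rpredM]. Qed.
Lemma OK_int D (m : int) : inOK D m%:~R.
Proof. by split; [apply: inK_int | apply: Aint_int]. Qed.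
Lemma OK_nat D (m : nat) : inOK D m%:R.
Proof. by have := OK_int D m; rewrite pmulrn. Qed.
Lemma OK_opp D x : inOK D x -> inOK D (- x).
Proof. by move=> H; rewrite -mulN1r; apply: OK_mul => //; apply: (OK_int D (-1)). Qed.
Lemma OK_sub D x y : inOK D x -> inOK D y -> inOK D (x - y).
Proof. by move=> ? ?; apply: OK_add => //; apply: OK_opp. Qed.
Lemma OK_exp D x k : inOK D x -> inOK D (x ^+ k).
Proof. by move=> H; elim: k => [|k IH]; [exact: (OK_int D 1) | rewrite exprS; apply: OK_mul]. Qed.
Lemma OK_sum D (I : Type) (r : seq I) (F : I -> algC) :
  (forall i, inOK D (F i)) -> inOK D (\sum_(i <- r) F i).
Proof. by move=> H; apply: big_ind => //; [exact: (OK_int D 0) | apply: OK_add]. Qed.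
Lemma fpoly_monic a1 : fpoly a1 \is monic.
Proof.
rewrite /fpoly -addrA monicE lead_coefDl ?lead_coefXn //.
rewrite size_polyXn ltnS.
apply: leq_trans (size_polyD _ _) _.
rewrite size_polyN geq_max size_polyN size_poly1 andbT.
apply: leq_trans (size_polyMleq _ _) _.
by rewrite size_polyX size_polyC; case: (_ != 0).
Qed.

Lemma fpoly_int a1 : fpoly a1 \is a polyOver Num.int.
Proof.
rewrite /fpoly; apply/polyOverP => i; rewrite !coefE.
rewrite ?rpredB ?rpredM ?rpred_nat //.
all: by case: (_ == _).
Qed.

Lemma two_neq0 : (2 : algC) != 0.
Proof. by rewrite pnatr_eq0. Qed.

Lemma discrE a1 : ((discr a1)%:R : algC) = a1%:R ^+ 2 + 4.
Proof. by rewrite /discr natrD natrX. Qed.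

Lemma root_OK a1 y : root (fpoly a1) y -> inOK (discr a1) y.
Proof.
move=> Hr; split; last first.
  apply: (root_monic_Aint (p := fpoly a1)); [exact: Hr | exact: fpoly_monic | exact: fpoly_int].
have Hy := @root_f _ _ Hr.
rewrite /inK; set sd := sqrtC (discr a1)%:R.
have Hs : sd ^+ 2 = a1%:R ^+ 2 + 4 by rewrite sqrtCK discrE.
have : (2 * y - a1%:R - sd) * (2 * y - a1%:R + sd) = 0.
  have -> : (2 * y - a1%:R - sd) * (2 * y - a1%:R + sd) =
     4 * (y ^+ 2 - a1%:R * y - 1) - (sd ^+ 2 - a1%:R ^+ 2 - 4) by ring.
  rewrite Hy Hs; ring.
move/eqP; rewrite mulf_eq0 => /orP [] /eqP H.
- exists (a1%:R / 2), (1 / 2).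
  rewrite fmorph_div /= fmorph_div /= !rmorph_nat rmorph1.
  apply/eqP; rewrite -subr_eq0.
  have -> : y - (a1%:R / 2 + 1 / 2 * sd) = (2 * y - a1%:R - sd) / 2.
    by field.
  by rewrite H mul0r.
- exists (a1%:R / 2), (-1 / 2).
  rewrite fmorph_div /= fmorph_div /= !rmorph_nat rmorphN rmorph1.
  apply/eqP; rewrite -subr_eq0.
  have -> : y - (a1%:R / 2 + -1 / 2 * sd) = (2 * y - a1%:R + sd) / 2.
    by field.
  by rewrite H mul0r.
Qed.

Lemma OK_ideal D : is_ideal D (inOK D).
Proof. split=> //; [exact: (OK_int D 0) | exact: OK_add | exact: OK_mul]. Qed.

Lemma id_N D (I : algC -> Prop) x : is_ideal D I -> I x -> I (- x).
Proof. by case=> _ _ _ HM Hx; rewrite -mulN1r; apply: HM => //; exact: (OK_int D (-1)). Qed.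
Lemma id_B D (I : algC -> Prop) x y : is_ideal D I -> I x -> I y -> I (x - y).
Proof. by move=> HI Hx Hy; case: (HI) => _ _ HD _; apply: HD => //; apply: id_N HI Hy. Qed.
Lemma id_D D (I : algC -> Prop) x y : is_ideal D I -> I x -> I y -> I (x + y).
Proof. by case=> _ _ H _; apply: H. Qed.
Lemma id_M D (I : algC -> Prop) a x : is_ideal D I -> inOK D a -> I x -> I (a * x).
Proof. by case=> _ _ _ H; apply: H. Qed.
Lemma id_Mr D (I : algC -> Prop) a x : is_ideal D I -> inOK D a -> I x -> I (x * a).
Proof. by move=> HI Ha Hx; rewrite mulrC; apply: id_M HI Ha Hx. Qed.
Lemma id_OK D (I : algC -> Prop) x : is_ideal D I -> I x -> inOK D x.
Proof. by case=> H _ _ _; apply: H. Qed.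
Lemma id_0 D (I : algC -> Prop) : is_ideal D I -> I 0.
Proof. by case. Qed.
Lemma id_sum D (I : algC -> Prop) (J : eqType) (r : seq J) (F : J -> algC) :
  is_ideal D I -> (forall j, j \in r -> I (F j)) -> I (\sum_(j <- r) F j).
Proof.
move=> HI H; rewrite big_seq_cond; apply: big_ind => //.
- exact: id_0 HI.
- by move=> a b; apply: id_D HI.
- by move=> j /andP [Hj _]; apply: H.
Qed.

Lemma Ipow_ideal D P v : is_ideal D P -> is_ideal D (ideal_pow D P v).
Proof.
move=> HP; elim: v => [|v IH]; first exact: OK_ideal.
split.
- move=> x /= [r [Hr ->]]; apply: (id_sum (OK_ideal D)) => u Hu.
  have [H1 H2] := Hr u Hu; apply: OK_mul; [exact: id_OK HP H1 | exact: id_OK IH H2].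
- by exists [::]; rewrite big_nil.
- move=> x y /= [r1 [H1 ->]] [r2 [H2 ->]]; exists (r1 ++ r2); split; last by rewrite big_cat.
  by move=> u; rewrite mem_cat => /orP []; [apply: H1 | apply: H2].
- move=> a x Ha /= [r [Hr ->]]; exists (map (fun u => (a * u.1, u.2)) r); split.
    move=> u /mapP [u' Hu' ->] /=; have [H1 H2] := Hr _ Hu'; split=> //.
    exact: id_M HP Ha H1.
  by rewrite big_map mulr_sumr; apply: eq_bigr => u _; rewrite mulrA.
Qed.

Lemma Ipow_S D P v x : is_ideal D P -> ideal_pow D P v.+1 x -> ideal_pow D P v x.
Proof.
move=> HP [r [Hr ->]]; apply: (id_sum (Ipow_ideal v HP)) => u Hu.
have [H1 H2] := Hr u Hu; apply: (id_M (Ipow_ideal v HP)) => //; exact: id_OK HP H1.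
Qed.

Lemma Ipow_le D P v w x : is_ideal D P -> (v <= w)%N -> ideal_pow D P w x -> ideal_pow D P v x.
Proof.
move=> HP /subnKC <-; elim: (w - v)%N => [|k IH]; first by rewrite addn0.
by rewrite addnS => H; apply: IH; apply: Ipow_S HP H.
Qed.

Lemma Ipow1 D P x : is_ideal D P -> ideal_pow D P 1 x -> P x.
Proof.
move=> HP [r [Hr ->]]; apply: (id_sum HP) => u Hu.
have [H1 H2] := Hr u Hu; apply: (id_Mr HP) => //.
Qed.

Lemma Ipow_P D P v x : is_ideal D P -> (1 <= v)%N -> ideal_pow D P v x -> P x.
Proof. by move=> HP Hv H; apply: (Ipow1 HP); exact: (Ipow_le HP Hv H). Qed.

Lemma Ipow_exp D P v y : is_ideal D P -> P y -> ideal_pow D P v (y ^+ v).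
Proof.
move=> HP Hy; elim: v => [|v IH]; first exact: (OK_int D 1).
exists [:: (y, y ^+ v)]; split; last by rewrite big_seq1 exprS.
by move=> u; rewrite inE => /eqP -> /=.
Qed.

Definition invmod D (I : algC -> Prop) y := exists2 u, inOK D u & I (u * y - 1).

Lemma invmod_lift D P v y : is_ideal D P -> inOK D y -> invmod D P y ->
  invmod D (ideal_pow D P v) y.
Proof.
move=> HP Hy [u Hu Hp].
set pi := u * y - 1 in Hp.
have Hq : P (- pi) by apply: (id_N HP).
exists (u * \sum_(i < v) (- pi) ^+ i).
  apply: OK_mul => //.
  apply: (id_sum (OK_ideal D)) => i _; apply: OK_exp; exact: id_OK HP Hq.
have E : u * y = - (- pi - 1) by rewrite /pi; ring.
have -> : u * (\sum_(i < v) (- pi) ^+ i) * y - 1 = - ((- pi - 1) * \sum_(i < v) (- pi) ^+ i) - 1.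
  by rewrite -mulrA (mulrC _ y) mulrA E; ring.
rewrite -subrX1 (_ : forall a : algC, - (a - 1) - 1 = - a); last by move=> a; ring.
apply: (id_N (Ipow_ideal v HP)); exact: Ipow_exp.
Qed.

Lemma invmod_cancel D I y c : is_ideal D I -> inOK D c -> invmod D I y -> I (y * c) -> I c.
Proof.
move=> HI Hc [w Hw H1] H2.
have -> : c = w * (y * c) - (w * y - 1) * c by ring.
apply: (id_B HI); first exact: (id_M HI).
exact: (id_Mr HI).
Qed.

Lemma P_of_ideal D P : is_prime_ideal D P -> is_ideal D P.
Proof. by case. Qed.

Lemma P_prime D P a b : is_prime_ideal D P -> inOK D a -> inOK D b -> P (a * b) -> P a \/ P b.
Proof. by case=> _ _ H; apply: H. Qed.

Lemma P_bezout D P (p : nat) (m : int) : is_prime_ideal D P -> prime p -> P p%:R ->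
  ~~ (p%:Z %| m)%Z -> exists u w : int, u * p%:Z + w * m = 1.
Proof.
move=> _ pp _ Hnd.
have [u [w E]] := Bezoutz p%:Z m.
exists u, w; rewrite E /gcdz /=.
have : coprime p `|m|%N by rewrite prime_coprime.
by rewrite /coprime => /eqP ->.
Qed.

Lemma P_int D P (p : nat) (m : int) : is_prime_ideal D P -> prime p -> P p%:R ->
  P m%:~R <-> (p%:Z %| m)%Z.
Proof.
move=> HPI pp Hpp; have HP := P_of_ideal HPI; split; last first.
  case/dvdzP=> q ->; rewrite rmorphM /= -pmulrn; exact: (id_M HP (OK_int D q)).
move=> Hm; apply/negPn/negP => Hnd.
have [u [w E]] := P_bezout HPI pp Hpp Hnd.
case: HPI => _ H1 _; apply: H1.
have -> : (1 : algC) = (u * p%:Z + w * m)%:~R by rewrite E.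
rewrite rmorphD !rmorphM /= -pmulrn.
by apply: (id_D HP); apply: (id_M HP (OK_int D _)).
Qed.

Lemma P_int_inv D P (p : nat) (m : int) : is_prime_ideal D P -> prime p -> P p%:R ->
  ~ P m%:~R -> exists w : int, P ((w * m)%:~R - 1).
Proof.
move=> HPI pp Hpp Hm; have HP := P_of_ideal HPI.
have Hnd : ~~ (p%:Z %| m)%Z by apply/negP => /(P_int m HPI pp Hpp).
have [u [w E]] := P_bezout HPI pp Hpp Hnd.
exists w; have -> : w * m = 1 - u * p%:Z by rewrite -E; ring.
rewrite rmorphB rmorph1 /= rmorphM /= -pmulrn.
have -> : 1 - u%:~R * p%:R - 1 = (- u)%:~R * (p%:R : algC) by rewrite rmorphN; ring.
exact: (id_M HP (OK_int D _)).
Qed.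

Lemma ZA_inv D P (p a1 : nat) (g : algC) (m n : int) :
  is_prime_ideal D P -> prime p -> P p%:R ->
  g ^+ 2 = a1%:R * g + 1 -> inOK D g ->
  ~ P (m%:~R + n%:~R * g) -> invmod D P (m%:~R + n%:~R * g).
Proof.
move=> HPI pp Hpp Hg gOK Hy; have HP := P_of_ideal HPI.
set y := m%:~R + n%:~R * g in Hy *.
have yOK : inOK D y by apply: OK_add; [exact: OK_int | apply: OK_mul => //; exact: OK_int].
set T : int := 2 * m + n * a1%:Z.
set N : int := m ^+ 2 + m * n * a1%:Z - n ^+ 2.
have E : y * (T%:~R - y) = N%:~R.
  rewrite /y /T /N ?rmorphD ?rmorphB ?rmorphM ?rmorphN ?rmorphXn /= -?pmulrn.
  have HH : n%:~R ^+ 2 * (g ^+ 2 - a1%:R * g - 1) = 0 by rewrite Hg; ring.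
  rewrite -[RHS]subr0 -HH; ring.
have TyOK : inOK D (T%:~R - y) by apply: OK_sub => //; exact: OK_int.
case: (classic (P N%:~R)) => HN.
- rewrite -E in HN; case: (P_prime HPI yOK TyOK HN) => // HTy.
  have HT : ~ P T%:~R.
    move=> HT; apply: Hy; have -> : y = T%:~R - (T%:~R - y) by ring.
    exact: (id_B HP).
  have [w Hw] := P_int_inv HPI pp Hpp HT.
  exists w%:~R; first exact: OK_int.
  have -> : w%:~R * y - 1 = ((w * T)%:~R - 1) - w%:~R * (T%:~R - y) by rewrite rmorphM; ring.
  by apply: (id_B HP) => //; apply: (id_M HP (OK_int D _)).
- have [w Hw] := P_int_inv HPI pp Hpp HN.
  exists (w%:~R * (T%:~R - y)); first by apply: OK_mul => //; exact: OK_int.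
  by rewrite -mulrA (mulrC _ y) E -rmorphM.
Qed.

Lemma quad_lt (R : nzRingType) (b c : R) : (size (- (b%:P * 'X) + c%:P)%R < size ('X^2 : {poly R}))%N.
Proof.
rewrite size_polyXn ltnS.
apply: leq_trans (size_polyD _ _) _.
rewrite size_polyN geq_max size_polyC; apply/andP; split; last by case: (_ != 0).
apply: leq_trans (size_polyMleq _ _) _.
by rewrite size_polyX size_polyC; case: (_ != 0).
Qed.
Lemma quad_monic (R : nzRingType) (b c : R) : 'X^2 - b%:P * 'X + c%:P \is monic.
Proof. rewrite -addrA monicE lead_coefDl; [by rewrite lead_coefXn | exact: quad_lt]. Qed.
Lemma quad_size (R : nzRingType) (b c : R) : size ('X^2 - b%:P * 'X + c%:P) = 3.
Proof. rewrite -addrA size_polyDl; [by rewrite size_polyXn | exact: quad_lt]. Qed.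

Local Notation pQtoC := (map_poly (ratr : rat -> algC)).
Lemma minpoly2 (x : algC) (b c : rat) : x \in Aint -> x \notin Crat ->
  x ^+ 2 - ratr b * x + ratr c = 0 -> (ratr b : algC) \in Num.int /\ (ratr c : algC) \in Num.int.
Proof.
move=> Ax Qx Hx.
have [pr [Dpr mon dvd]] := minCpolyP x.
set q : {poly rat} := 'X^2 - b%:P * 'X + c%:P.
have Eq : pQtoC q = 'X^2 - (ratr b)%:P * 'X + (ratr c)%:P.
  by rewrite /q rmorphD rmorphB rmorphM /= rmorphM /= !map_polyX !map_polyC /= expr2.
have rq : root (pQtoC q) x by rewrite Eq /root !hornerE Hx.
have dq : (pr %| q)%R by rewrite -dvd.
have sq : size q = 3 by apply: quad_size.
have q0 : q != 0 by rewrite -size_poly_eq0 sq.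
have s1 : (1 < size pr)%N.
  by have := size_minCpoly x; rewrite Dpr size_map_poly.
have s3 : (size pr <= size q)%N by apply: dvdp_leq.
rewrite sq in s3.
have mq : q \is monic by apply: quad_monic.
have : (size pr == 2)%N || (size pr == 3)%N.
  by move: s1 s3; case: (size pr) => [|[|[|[|k]]]].
case/orP => /eqP Hs.
  have Epr : pr = 'X + (pr`_0)%:P.
    apply/polyP => i; rewrite coefD coefX coefC.
    case: i => [|[|i]] /=; first by rewrite add0r.
      by rewrite addr0; have := monicP mon; rewrite lead_coefE Hs.
    by rewrite addr0 nth_default // Hs.
  have := root_minCpoly x; rewrite Dpr Epr rmorphD /= map_polyX map_polyC /=.
  rewrite /root !hornerE => /eqP Hr.
  exfalso; move/negP: Qx; apply; apply/CratP; exists (- pr`_0).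
  by rewrite rmorphN /= -[x]subr0 -Hr; ring.
have : pr %= q by rewrite -dvdp_size_eqp // Hs sq.
rewrite eqp_monic // => /eqP Epr.
move: Ax; rewrite unfold_in /= Dpr Epr Eq => /polyOverP Hc.
split.
  have := Hc 1%N; rewrite !coefE /= sub0r mulr1 addr0 => H.
  by rewrite -[ratr b]opprK rpredN.
have := Hc 0%N; rewrite !coefE /= mulr0 subr0 add0r => H.
by [].
Qed.

Lemma int_unit_contra (k : int) (a : nat) : (1 <= a)%N -> k * (k - a%:Z) = 1 -> False.
Proof.
move=> Ha H.
have : (k == 1) || (k == -1).
  by have := @intUnitRing.unitzPl k (k - a%:Z); rewrite mulrC H => /(_ erefl).
case/orP => /eqP E; rewrite E in H; lia.
Qed.

Definition ZA (g y : algC) := exists m n : int, y = m%:~R + n%:~R * g.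

Lemma sd_alpha a1 (y : algC) : root (fpoly a1) y ->
  sqrtC (discr a1)%:R = 2 * y - a1%:R \/ sqrtC (discr a1)%:R = - (2 * y - a1%:R).
Proof.
move=> Hr; have Hy := @root_f _ _ Hr.
set sd := sqrtC (discr a1)%:R.
have Hs : sd ^+ 2 = a1%:R ^+ 2 + 4 by rewrite sqrtCK discrE.
have : (2 * y - a1%:R - sd) * (2 * y - a1%:R + sd) = 0.
  have -> : (2 * y - a1%:R - sd) * (2 * y - a1%:R + sd) =
     4 * (y ^+ 2 - a1%:R * y - 1) - (sd ^+ 2 - a1%:R ^+ 2 - 4) by ring.
  rewrite Hy Hs; ring.
move/eqP; rewrite mulf_eq0 => /orP [] /eqP H.
- left; apply/eqP; rewrite -subr_eq0.
  have -> : sd - (2 * y - a1%:R) = - (2 * y - a1%:R - sd) by ring.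
  by rewrite H oppr0.
- right; apply/eqP; rewrite -subr_eq0.
  have -> : sd - - (2 * y - a1%:R) = (2 * y - a1%:R + sd) by ring.
  by rewrite H.
Qed.

Lemma alpha_notQ a1 (y : algC) : (1 <= a1)%N -> root (fpoly a1) y -> y \notin Crat.
Proof.
move=> Ha Hr; apply/negP => Qy.
have [_ Ay] := root_OK Hr.
have /intrP [k Ek] := Cint_rat_Aint Qy Ay.
have Hy := @root_f _ _ Hr.
apply: (@int_unit_contra k a1 Ha); apply: (@intr_inj algC).
rewrite rmorphM rmorphB /= -Ek -pmulrn rmorph1.
by rewrite mulrBr -expr2 Hy; ring.
Qed.

Lemma OK_rat_form a1 (y x : algC) : root (fpoly a1) y -> inOK (discr a1) x ->
  exists m0 n0 : rat, x = ratr m0 + ratr n0 * y.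
Proof.
move=> Hr [[q [r ->]] _].
case: (sd_alpha Hr) => ->.
- exists (q - r * a1%:R), (2 * r); rewrite rmorphB !rmorphM /= !rmorph_nat; ring.
- exists (q + r * a1%:R), (- 2 * r); rewrite rmorphD !rmorphM rmorphN /= !rmorph_nat; ring.
Qed.

Lemma Aint_sq (y : algC) (K : int) : y ^+ 2 = K%:~R -> y \in Aint.
Proof.
move=> Hy; apply: (@root_monic_Aint ('X^2 - 0%:P * 'X + (- K%:~R)%:P)).
- by rewrite /root !hornerE Hy; apply/eqP; ring.
- exact: quad_monic.
- apply/polyOverP => i; rewrite !coefE.
  rewrite ?rpredB ?rpredM ?rpredN ?rpred_int ?rpred0 //.
  by rewrite rpredD ?rpredB ?rpred_nat ?mul0r ?rpred0 //; case: (_ == _); rewrite ?rpredN ?rpred_int ?rpred0.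
Qed.

Lemma OK_ZA a1 (y x : algC) : (1 <= a1)%N -> root (fpoly a1) y -> inOK (discr a1) x ->
  ZA y ((discr a1)%:R * x).
Proof.
move=> Ha Hr Hx.
have [m0 [n0 Ex]] := OK_rat_form Hr Hx.
have Hy := @root_f _ _ Hr.
have Ay : y \in Aint by case: (root_OK Hr).
have Ax : x \in Aint by case: Hx.
set D := discr a1.
have Mint : (ratr (D%:R * n0) : algC) \in Num.int.
  have [->|n0N] := eqVneq n0 0; first by rewrite mulr0 rmorph0 rpred0.
  have xQ : x \notin Crat.
    apply/negP => /CratP [c Ec].
    have : y \in Crat.
      apply/CratP; exists ((c - m0) / n0).
      rewrite fmorph_div /= rmorphB /= -Ec Ex.
      have n0C : (ratr n0 : algC) != 0 by rewrite fmorph_eq0.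
      by field.
    by rewrite (negbTE (alpha_notQ Ha Hr)).
  set T0 := 2 * m0 + n0 * a1%:R.
  set N0 := m0 ^+ 2 + m0 * n0 * a1%:R - n0 ^+ 2.
  have Hq : x ^+ 2 - ratr T0 * x + ratr N0 = 0.
    rewrite Ex /T0 /N0 ?rmorphD ?rmorphB ?rmorphM ?rmorphXn /= ?rmorph_nat.
    have HH : (ratr n0) ^+ 2 * (y ^+ 2 - a1%:R * y - 1) = 0 :> algC by rewrite Hy; ring.
    rewrite -[RHS]HH; ring.
  have [HT HN] := minpoly2 Ax xQ Hq.
  have /intrP [K EK] : (ratr (D%:R) : algC) * ((ratr T0) ^+ 2 - 4 * ratr N0) \in Num.int.
    by rewrite rmorph_nat rpredM ?rpred_nat // rpredB ?rpredX // rpredM // rpred_nat.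
  apply: (Cint_rat_Aint (Crat_rat _)).
  apply: (@Aint_sq _ K); rewrite -EK /T0 /N0 /D.
  rewrite ?rmorphD ?rmorphB ?rmorphM ?rmorphXn /= ?rmorph_nat.
  rewrite ?rmorphD ?rmorphN ?rmorphM ?rmorphXn ?rmorph1 ?rmorph_nat; ring.
have Eq : (ratr (D%:R * m0) : algC) = D%:R * x - ratr (D%:R * n0) * y.
  by rewrite Ex !rmorphM /= rmorph_nat; ring.
have Aint_m : (ratr (D%:R * m0) : algC) \in Aint.
  rewrite Eq; apply: rpredB; apply: rpredM => //; [exact: rpred_nat | exact: Aint_Cint].
have /intrP [m Em] := Cint_rat_Aint (Crat_rat _) Aint_m.
have /intrP [n En] := Mint.
exists m, n; rewrite -Em -En Ex !rmorphM /= rmorph_nat; ring.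
Qed.

Lemma P_dvd D P (p : nat) (m : int) : is_prime_ideal D P -> prime p -> P p%:R ->
  P m%:~R -> exists k : int, (m%:~R : algC) = k%:~R * p%:R.
Proof.
move=> HPI pp Hpp /(P_int m HPI pp Hpp) /dvdzP [k ->].
by exists k; rewrite rmorphM /= -pmulrn.
Qed.

Lemma g_split D P (p a1 : nat) (ga de : algC) (c : int) :
  is_prime_ideal D P -> prime p -> P p%:R -> ga + de = a1%:R -> ga * de = -1 ->
  inOK D ga -> inOK D de -> P (ga - c%:~R) ->
  forall pi, P pi -> ZA ga (D%:R * pi) ->
  exists o, inOK D o /\ (de - c%:~R) * (D%:R * pi) = p%:R * o.
Proof.
move=> HPI pp Hpp Hs Hm gOK dOK Hgc pi Hpi [m [n Ep]].
have HP := P_of_ideal HPI.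
have Hmn : P (m + n * c)%:~R.
  have -> : ((m + n * c)%:~R : algC) = D%:R * pi - n%:~R * (ga - c%:~R).
    by rewrite Ep rmorphD rmorphM; ring.
  apply: (id_B HP); first exact: (id_M HP (OK_nat D D)).
  exact: (id_M HP (OK_int D n)).
have He : P (c ^+ 2 - a1%:Z * c - 1)%:~R.
  have -> : ((c ^+ 2 - a1%:Z * c - 1)%:~R : algC) = (de - c%:~R) * (ga - c%:~R).
    rewrite ?rmorphB ?rmorphM ?rmorphXn ?rmorph1 /= -?pmulrn.
    by rewrite -Hs -[-1]Hm; ring.
  apply: (id_M HP) => //; apply: OK_sub => //; exact: OK_int.
have [k Ek] := P_dvd HPI pp Hpp Hmn.
have [l El] := P_dvd HPI pp Hpp He.
exists (k%:~R * (de - c%:~R) + n%:~R * l%:~R); split.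
  apply: OK_add; apply: OK_mul; try exact: OK_int.
  apply: OK_sub => //; exact: OK_int.
have E1 : D%:R * pi = (m + n * c)%:~R + n%:~R * (ga - c%:~R) by rewrite Ep rmorphD rmorphM; ring.
have E2 : (de - c%:~R) * (ga - c%:~R) = (c ^+ 2 - a1%:Z * c - 1)%:~R.
  rewrite ?rmorphB ?rmorphM ?rmorphXn ?rmorph1 /= -?pmulrn.
  by rewrite -Hs -[-1]Hm; ring.
rewrite E1 Ek.
have -> : (de - c%:~R) * (k%:~R * p%:R + n%:~R * (ga - c%:~R)) =
  (de - c%:~R) * k%:~R * p%:R + n%:~R * ((de - c%:~R) * (ga - c%:~R)) by ring.
rewrite E2 El; ring.
Qed.

Lemma g_inert D P (p a1 : nat) (al be : algC) :
  is_prime_ideal D P -> prime p -> P p%:R -> al + be = a1%:R -> al * be = -1 ->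
  inOK D al -> inOK D be ->
  (forall c : int, ~ P (c ^+ 2 - a1%:Z * c - 1)%:~R) ->
  forall pi, P pi -> ZA al (D%:R * pi) ->
  exists o, inOK D o /\ D%:R * pi = p%:R * o.
Proof.
move=> HPI pp Hpp Hs Hm aOK bOK Hno pi Hpi [m [n Ep]].
have HP := P_of_ideal HPI.
have HDpi : P (D%:R * pi) by exact: (id_M HP (OK_nat D D)).
set N : int := m ^+ 2 + m * n * a1%:Z - n ^+ 2.
have HN : P N%:~R.
  have -> : (N%:~R : algC) = (D%:R * pi) * (m%:~R + n%:~R * be).
    rewrite Ep /N ?rmorphB ?rmorphD ?rmorphM ?rmorphXn /= -?pmulrn.
    rewrite -Hs; have -> : (n%:~R : algC) * n%:~R = - (n%:~R * n%:~R * (al * be)) by rewrite Hm; ring.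
    ring.
  apply: (id_Mr HP) => //; apply: OK_add; [exact: OK_int | apply: OK_mul => //; exact: OK_int].
have Hn : P n%:~R.
  apply: NNPP => Hn.
  have [n' Hn'] := P_int_inv HPI pp Hpp Hn.
  apply: (Hno (- m * n')).
  set e : int := n' * n - 1.
  have -> : (- m * n') ^+ 2 - a1%:Z * (- m * n') - 1 = n' ^+ 2 * N - e * (a1%:Z * m * n' - 2 - e).
    by rewrite /N /e; ring.
  rewrite rmorphB /=; apply: (id_B HP).
    by rewrite rmorphM /=; apply: (id_M HP (OK_int D _)).
  rewrite rmorphM /= mulrC; apply: (id_M HP (OK_int D _)).
  by rewrite /e rmorphB /= rmorph1.
have Hmm : P (m%:~R * m%:~R).
  have -> : (m%:~R * m%:~R : algC) = N%:~R - (m * a1%:Z)%:~R * n%:~R + n%:~R * n%:~R.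
    by rewrite /N ?rmorphB ?rmorphD ?rmorphM ?rmorphXn /=; ring.
  apply: (id_D HP); first apply: (id_B HP) => //.
    exact: (id_M HP (OK_int D _)).
  exact: (id_M HP (OK_int D _)).
have mOK := OK_int D m.
have [Hm'|Hm'] := P_prime HPI mOK mOK Hmm.
all: have [m1 Em1] := P_dvd HPI pp Hpp Hm'.
all: have [n1 En1] := P_dvd HPI pp Hpp Hn.
all: exists (m1%:~R + n1%:~R * al); split;
  [apply: OK_add; [exact: OK_int | apply: OK_mul => //; exact: OK_int]
  | by rewrite Ep Em1 En1; ring].
Qed.

Lemma P_pow D P g k : is_prime_ideal D P -> inOK D g -> P (g ^+ k) -> P g.
Proof.
move=> HPI gOK; elim: k => [|k IH]; first by case: HPI => _ H _; rewrite expr0.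
rewrite exprS => H; case: (P_prime HPI gOK (OK_exp k gOK) H) => //; exact: IH.
Qed.

Lemma g_exists a1 (al be : algC) (p : nat) P :
  (1 <= a1)%N -> root (fpoly a1) al -> root (fpoly a1) be -> al != be ->
  prime p -> ~~ (p %| discr a1)%N -> is_prime_ideal (discr a1) P -> P p%:R ->
  exists g, [/\ inOK (discr a1) g, ~ P g &
    forall pi, P pi -> exists o, inOK (discr a1) o /\ g * pi = p%:R * o].
Proof.
move=> Ha ra rb nab pp npD HPI Hpp.
set D := discr a1.
have HP := P_of_ideal HPI.
have [Hs Hm] := roots_ab ra rb nab.
have aOK := root_OK ra; have bOK := root_OK rb.
have nDz : ~~ (p%:Z %| D%:Z)%Z by [].
have HDn : ~ P D%:R.
  move=> H; have H' : P (D%:Z)%:~R by [].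
  by move/negP: nDz; apply; apply/(P_int _ HPI pp Hpp).
have [u [w Euw]] := P_bezout HPI pp Hpp nDz.
have HD2 : (al - be) ^+ 2 = D%:R.
  rewrite /D discrE -Hs; have -> : (4 : algC) = - 4 * (al * be) by rewrite Hm; ring.
  ring.
have to_pi : forall g, inOK D g ->
   (forall pi, P pi -> exists o1, inOK D o1 /\ g * (D%:R * pi) = p%:R * o1) ->
   forall pi, P pi -> exists o, inOK D o /\ g * pi = p%:R * o.
  move=> g gOK H pi Hpi; have [o1 [o1OK E1]] := H pi Hpi.
  have piOK := id_OK HP Hpi.
  exists (u%:~R * (g * pi) + w%:~R * o1); split.
    by apply: OK_add; apply: OK_mul => //; [exact: OK_int | apply: OK_mul | exact: OK_int].
  transitivity (g * pi * (u * p%:Z + w * D%:Z)%:~R); first by rewrite Euw mulr1.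
  rewrite rmorphD !rmorphM /= -!pmulrn.
  have -> : g * pi * (u%:~R * p%:R + w%:~R * D%:R) = p%:R * (u%:~R * (g * pi)) + w%:~R * (g * (D%:R * pi)) by ring.
  by rewrite E1; ring.
case: (classic (exists c : int, P (c ^+ 2 - a1%:Z * c - 1)%:~R)) => [[c Hc]|Hno].
- have E : ((c ^+ 2 - a1%:Z * c - 1)%:~R : algC) = (al - c%:~R) * (be - c%:~R).
    rewrite ?rmorphB ?rmorphM ?rmorphXn ?rmorph1 /= -?pmulrn.
    by rewrite -Hs -[-1]Hm; ring.
  have cOK := OK_int D c.
  rewrite E in Hc.
  have ncP : forall x y, P (x - c%:~R) -> P (y - c%:~R) -> (x - y) ^+ 2 = D%:R -> False.
    move=> x y Hx Hy Exy; apply: HDn; rewrite -Exy.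
    have Hxy : P (x - y).
      have -> : x - y = (x - c%:~R) - (y - c%:~R) by ring.
      exact: (id_B HP).
    by have := id_M HP (id_OK HP Hxy) Hxy; rewrite -expr2.
  case: (P_prime HPI (OK_sub aOK cOK) (OK_sub bOK cOK) Hc) => H.
  + exists (be - c%:~R); split; first exact: OK_sub.
      by move=> Hb; apply: (ncP _ _ H Hb HD2).
    apply: to_pi; first exact: OK_sub.
    move=> pi Hpi; apply: (g_split HPI pp Hpp Hs Hm aOK bOK H Hpi).
    exact: OK_ZA Ha ra (id_OK HP Hpi).
  + exists (al - c%:~R); split; first exact: OK_sub.
      move=> Ha'; apply: (ncP _ _ Ha' H HD2).
    apply: to_pi; first exact: OK_sub.
    have Hs' : be + al = a1%:R by rewrite addrC.
    have Hm' : be * al = -1 by rewrite mulrC.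
    move=> pi Hpi; apply: (g_split HPI pp Hpp Hs' Hm' bOK aOK H Hpi).
    exact: OK_ZA Ha rb (id_OK HP Hpi).
- exists 1; split; first exact: (OK_int D 1).
    by case: HPI.
  apply: to_pi; first exact: (OK_int D 1).
  move=> pi Hpi; rewrite mul1r.
  have Hno' : forall c : int, ~ P (c ^+ 2 - a1%:Z * c - 1)%:~R by move=> c Hc; apply: Hno; exists c.
  apply: (g_inert HPI pp Hpp Hs Hm aOK bOK Hno' Hpi).
  exact: OK_ZA Ha ra (id_OK HP Hpi).
Qed.

Lemma Ipow_g D P (p : nat) g : is_ideal D P -> inOK D g ->
  (forall pi, P pi -> exists o, inOK D o /\ g * pi = p%:R * o) ->
  forall v b, ideal_pow D P v b -> exists o, inOK D o /\ g ^+ v * b = (p ^ v)%:R * o.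
Proof.
move=> HP gOK Hg; elim=> [|v IH] b.
  by move=> Hb; exists b; rewrite expr0 expn0 !mul1r.
move=> [r [Hr ->]]; elim: r Hr => [|u r IHr] Hr.
  by exists 0; split; [exact: (OK_int D 0) | rewrite big_nil !mulr0].
have [|o1 [o1OK E1]] := IHr; first by move=> u' Hu'; apply: Hr; rewrite inE Hu' orbT.
have [H1 H2] : P u.1 /\ ideal_pow D P v u.2 by apply: Hr; rewrite inE eqxx.
have [o2 [o2OK E2]] := Hg _ H1.
have [o3 [o3OK E3]] := IH _ H2.
exists (o2 * o3 + o1); split; first by apply: OK_add => //; apply: OK_mul.
rewrite big_cons mulrDr E1 expnS natrM exprS.
have -> : g * g ^+ v * (u.1 * u.2) = (g * u.1) * (g ^+ v * u.2) by ring.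
rewrite E2 E3; ring.
Qed.

Lemma Ipow_nat a1 (al be : algC) (p : nat) P v (N : nat) :
  (1 <= a1)%N -> root (fpoly a1) al -> root (fpoly a1) be -> al != be ->
  prime p -> ~~ (p %| discr a1)%N -> is_prime_ideal (discr a1) P -> P p%:R ->
  ideal_pow (discr a1) P v N%:R -> (p ^ v %| N)%N.
Proof.
move=> Ha ra rb nab pp npD HPI Hpp HN.
set D := discr a1.
have HP := P_of_ideal HPI.
have [g [gOK ngP Hg]] := g_exists Ha ra rb nab pp npD HPI Hpp.
case: (posnP N) => [->|N0]; first exact: dvdn0.
have [m' cop EN] := pfactor_coprime pp N0.
set j := logn p N in EN.
case: (leqP v j) => [vj|jv].
  by rewrite EN dvdn_mull // dvdn_exp2l.
exfalso.
have Hm' : ~ P (m'%:Z)%:~R.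
  move/(P_int _ HPI pp Hpp) => H.
  have H' : (p %| m')%N by [].
  by move: cop; rewrite prime_coprime // H'.
have [w Hw] := P_int_inv HPI pp Hpp Hm'.
have inv1 : invmod D P (m'%:R).
  by exists w%:~R; [exact: OK_int | move: Hw; rewrite rmorphM].
have invv := invmod_lift v HP (OK_nat D m') inv1.
have Hj : ideal_pow D P v (p ^ j)%:R.
  apply: (invmod_cancel (Ipow_ideal v HP) (OK_nat D _) invv).
  by rewrite -natrM -EN.
have Hj1 : ideal_pow D P j.+1 (p ^ j)%:R by apply: Ipow_le HP jv Hj.
have [o [oOK Eo]] := Ipow_g HP gOK Hg Hj1.
apply: ngP; apply: (P_pow (k := j.+1) HPI gOK).
have pj0 : ((p ^ j)%:R : algC) != 0.
  by rewrite pnatr_eq0 expn_eq0 negb_and -lt0n prime_gt0.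
have -> : g ^+ j.+1 = p%:R * o.
  apply: (mulIf pj0); rewrite Eo expnSr natrM; ring.
exact: (id_Mr HP oOK Hpp).
Qed.

Lemma Ipow_int a1 (al be : algC) (p : nat) P v (m : int) :
  (1 <= a1)%N -> root (fpoly a1) al -> root (fpoly a1) be -> al != be ->
  prime p -> ~~ (p %| discr a1)%N -> is_prime_ideal (discr a1) P -> P p%:R ->
  ideal_pow (discr a1) P v m%:~R -> ((p ^ v)%:Z %| m)%Z.
Proof.
move=> Ha ra rb nab pp npD HPI Hpp.
have HI := Ipow_ideal v (P_of_ideal HPI).
case: m => N H.
  exact: (Ipow_nat Ha ra rb nab pp npD HPI Hpp H).
have H' : ideal_pow (discr a1) P v N.+1%:R.
  by move: (id_N HI H); rewrite NegzE rmorphN opprK.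
exact: (Ipow_nat Ha ra rb nab pp npD HPI Hpp H').
Qed.

Lemma ZA_int g (m : int) : ZA g m%:~R.
Proof. by exists m, 0; rewrite mul0r addr0. Qed.
Lemma ZA_g g : ZA g g.
Proof. by exists 0, 1; rewrite mul1r add0r. Qed.
Lemma ZA_add g x y : ZA g x -> ZA g y -> ZA g (x + y).
Proof. by move=> [m1 [n1 ->]] [m2 [n2 ->]]; exists (m1 + m2), (n1 + n2); rewrite !rmorphD; ring. Qed.
Lemma ZA_opp g x : ZA g x -> ZA g (- x).
Proof. by move=> [m1 [n1 ->]]; exists (- m1), (- n1); rewrite !rmorphN; ring. Qed.
Lemma ZA_sub g x y : ZA g x -> ZA g y -> ZA g (x - y).
Proof. by move=> ? ?; apply: ZA_add => //; apply: ZA_opp. Qed.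
Lemma ZA_mul (a1 : nat) g x y : g ^+ 2 = a1%:R * g + 1 -> ZA g x -> ZA g y -> ZA g (x * y).
Proof.
move=> Hg [m1 [n1 ->]] [m2 [n2 ->]].
exists (m1 * m2 + n1 * n2), (m1 * n2 + n1 * m2 + n1 * n2 * a1%:Z).
rewrite !rmorphD !rmorphM /= -pmulrn.
apply/eqP; rewrite -subr_eq0; apply/eqP.
transitivity (n1%:~R * n2%:~R * (g ^+ 2 - a1%:R * g - 1)); first ring.
rewrite Hg; ring.
Qed.
Lemma ZA_exp (a1 : nat) g x k : g ^+ 2 = a1%:R * g + 1 -> ZA g x -> ZA g (x ^+ k).
Proof.
move=> Hg Hx; elim: k => [|k IH]; first exact: (ZA_int g 1).
by rewrite exprS; apply: (ZA_mul Hg).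
Qed.
Lemma ZA_OK D g y : inOK D g -> ZA g y -> inOK D y.
Proof.
by move=> gOK [m [n ->]]; apply: OK_add; [exact: OK_int | apply: OK_mul => //; exact: OK_int].
Qed.

Lemma xform a1 (x : nat -> int) (al be : algC) :
  in_Lf a1 x -> x 0%N = 1 -> al ^+ 2 = a1%:R * al + 1 -> be ^+ 2 = a1%:R * be + 1 ->
  forall n, (al - be) * (x n)%:~R = ((x 1%N)%:~R - be) * al ^+ n + (al - (x 1%N)%:~R) * be ^+ n.
Proof.
move=> Hx x0 Ha Hb.
suff H : forall n, (al - be) * (x n)%:~R = ((x 1%N)%:~R - be) * al ^+ n + (al - (x 1%N)%:~R) * be ^+ n /\
  (al - be) * (x n.+1)%:~R = ((x 1%N)%:~R - be) * al ^+ n.+1 + (al - (x 1%N)%:~R) * be ^+ n.+1.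
  by move=> n; case: (H n).
elim=> [|n [IH1 IH2]].
  by rewrite x0 !expr0 !expr1; split; ring.
split=> //.
rewrite Hx rmorphD rmorphM /= -pmulrn.
have -> : (al - be) * (a1%:R * (x n.+1)%:~R + (x n)%:~R) =
  a1%:R * ((al - be) * (x n.+1)%:~R) + (al - be) * (x n)%:~R by ring.
rewrite IH1 IH2 !exprS.
have -> : al * (al * al ^+ n) = (al ^+ 2) * al ^+ n by ring.
have -> : be * (be * be ^+ n) = (be ^+ 2) * be ^+ n by ring.
rewrite Ha Hb; ring.
Qed.

Lemma key_id (al be X1 Xs Xt : algC) (s k : nat) :
  al * be = -1 ->
  (al - be) * Xs = (X1 - be) * al ^+ s + (al - X1) * be ^+ s ->
  (al - be) * Xt = (X1 - be) * al ^+ (s + k.*2) + (al - X1) * be ^+ (s + k.*2) ->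
  (al - be) * (Xs - Xt) = al ^+ s * (1 - al ^+ k.*2) *
    (X1 * (1 - (-1) ^+ (s + k.*2).+1 * al ^- (s + (s + k.*2))) -
     (be - al * ((-1) ^+ (s + k.*2).+1 * al ^- (s + (s + k.*2))))).
Proof.
move=> Hab Hs Ht.
have al0 : al != 0 by apply/eqP => a0; move: Hab; rewrite a0 mul0r => /eqP; rewrite eq_sym oppr_eq0 oner_eq0.
set A := al ^+ s; set B := al ^+ k.*2; set sg : algC := (-1) ^+ s.
have A0 : A != 0 by rewrite expf_neq0.
have B0 : B != 0 by rewrite expf_neq0.
have E2 : forall n, ((-1 : algC) ^+ n.*2) = 1 by move=> n; rewrite -mul2n exprM sqrrN !expr1n.
have Ebs : be ^+ s = sg / A.
  apply: (mulfI A0); rewrite [RHS]mulrC divfK //.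
  by rewrite /A /sg -exprMn Hab.
have Ebk : be ^+ k.*2 = 1 / B.
  apply: (mulfI B0); rewrite [RHS]mulrC divfK //.
  by rewrite /B -exprMn Hab E2.
have Ez : (-1) ^+ (s + k.*2).+1 * al ^- (s + (s + k.*2)) = - sg / (A * A * B).
  by rewrite exprS exprD E2 mulr1 !exprD -/A -/B -/sg mulN1r mulrA.
rewrite Ez mulrBr Hs Ht !exprD Ebs Ebk -/A -/B.
field.
by rewrite A0 B0.
Qed.

Lemma split_k (s t n : nat) : (s < t)%N -> (t < 2 * n)%N -> odd s = odd t ->
  exists k, t = (s + k.*2)%N /\ (0 < k)%N /\ (k < n)%N.
Proof.
move=> st t2n Hodd.
have Hd : odd (t - s) = false by rewrite oddB ?(ltnW st) // Hodd addbb.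
exists (t - s)./2.
have := halfK (t - s); rewrite Hd subn0 => Hk.
lia.
Qed.

Lemma ZA_1 g : ZA g 1.
Proof. by exists 1, 0; rewrite mul0r addr0. Qed.

Theorem mainTheorem13
  (a1 : nat) (x : nat -> int) (alpha beta : algC) (p : nat)
  (P : algC -> Prop) (v n s t : nat) :
  (1 <= a1)%N ->
  in_Lf a1 x -> x 0%N = 1 ->
  root (fpoly a1) alpha -> root (fpoly a1) beta -> alpha != beta ->
  prime p -> ~~ (p %| discr a1)%N ->
  is_prime_ideal (discr a1) P -> lies_over P p ->
  (1 <= v)%N ->
  is_ord_mod P (alpha ^+ 2) n ->
  (s < t)%N -> (t < 2 * n)%N -> odd s = odd t ->
  let z := (-1) ^+ t.+1 * alpha ^- (s + t) in
  ((x s == x t %[mod (p ^ v)%N])%Z <->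
   exists w : algC, inOK (discr a1) w /\
     congr_mod (ideal_pow (discr a1) P v) ((1 - z) * w) 1 /\
     congr_mod (ideal_pow (discr a1) P v) ((x 1%N)%:~R) ((beta - alpha * z) * w)).
Proof.
move=> Ha HLf x0 ra rb nab pp npD HPI Hpp Hv Hord st t2n Hodd z.
rewrite /congr_mod.
set D := discr a1.
have HP := P_of_ideal HPI.
have HI := Ipow_ideal v HP.
have [Hs Hm] := roots_ab ra rb nab.
have Hal := @root_f _ _ ra; have Hbe := @root_f _ _ rb.
have aOK := root_OK ra; have bOK := root_OK rb.
have al0 : alpha != 0 by apply/eqP => a0; move: Hm; rewrite a0 mul0r => /eqP; rewrite eq_sym oppr_eq0 oner_eq0.
have [k [Et [k0 kn]]] : exists k, t = (s + k.*2)%N /\ (0 < k)%N /\ (k < n)%N.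
  exact: split_k.
subst t.
have ZA_inv' : forall y, ZA alpha y -> ~ P y -> invmod D P y.
  by move=> y [m [m' Ey]] Hy; rewrite Ey; apply: (ZA_inv HPI pp Hpp Hal aOK); rewrite -Ey.
have beZA : ZA alpha beta.
  by exists a1%:Z, (-1); rewrite -pmulrn rmorphN rmorph1 mulN1r -Hs; ring.
have HD2 : (alpha - beta) ^+ 2 = D%:R.
  rewrite /D discrE -Hs; have -> : (4 : algC) = - 4 * (alpha * beta) by rewrite Hm; ring.
  ring.
have HDn : ~ P D%:R.
  move=> H; have H' : P (D%:Z)%:~R by [].
  by move/negP: npD; apply; move/(P_int _ HPI pp Hpp): H'.
have abOK : inOK D (alpha - beta) by apply: OK_sub.
have nPab : ~ P (alpha - beta).
  by move=> H; apply: HDn; rewrite -HD2 expr2; apply: (id_M HP).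
have inv_ab : invmod D P (alpha - beta) by apply: ZA_inv' => //; apply: ZA_sub => //; exact: ZA_g.
set B := alpha ^+ k.*2.
have BZA : ZA alpha (1 - B) by apply: ZA_sub; [exact: ZA_1 | apply: (ZA_exp _ Hal); exact: ZA_g].
have nPB : ~ P (1 - B).
  case: Hord => _ [_ Hn] H; apply: (Hn k); first by rewrite k0.
  rewrite /congr_mod -exprM mul2n -/B.
  have -> : B - 1 = - (1 - B) by ring.
  exact: (id_N HP).
have inv_B : invmod D P (1 - B) by apply: ZA_inv'.
have ainv : alpha^-1 = alpha - a1%:R.
  apply: (mulfI al0); rewrite mulfV //; apply/eqP; rewrite eq_sym -subr_eq0.
  by rewrite mulrBr -expr2 Hal; apply/eqP; ring.
have zZA : ZA alpha z.
  rewrite /z -exprVn ainv; apply: (ZA_mul Hal); apply: (ZA_exp _ Hal).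
    exact: ZA_opp (ZA_1 _).
  by apply: ZA_sub; [exact: ZA_g | exact: ZA_int a1].
have zOK : inOK D z by exact: ZA_OK aOK zZA.
have X1OK : inOK D (x 1%N)%:~R by exact: OK_int.
set E := (x 1%N)%:~R * (1 - z) - (beta - alpha * z).
have EOK : inOK D E.
  by apply: OK_sub; [apply: OK_mul => //; apply: OK_sub => //; exact: (OK_int D 1)
     | apply: OK_sub => //; exact: OK_mul].
have HXn := xform HLf x0 Hal Hbe.
have Hid := key_id Hm (HXn s) (HXn (s + k.*2)%N).
rewrite -/z -/B -/E in Hid.
have HunitA : (- beta) ^+ s * alpha ^+ s = 1.
  by rewrite -exprMn (_ : - beta * alpha = 1) ?expr1n // mulrC mulrN Hm opprK.
have nbOK : inOK D ((- beta) ^+ s) by apply: OK_exp; apply: OK_opp.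
have AOK : inOK D (alpha ^+ s) by apply: OK_exp.
have BOK : inOK D (1 - B) by apply: OK_sub; [exact: (OK_int D 1) | exact: OK_exp].
have zzOK : inOK D (1 - z) by apply: OK_sub => //; exact: (OK_int D 1).
have bzOK : inOK D (beta - alpha * z) by apply: OK_sub => //; apply: OK_mul.
split.
- rewrite eqz_mod_dvd => /dvdzP [q Eq].
  have H1 : ideal_pow D P v ((x s)%:~R - (x (s + k.*2)%N)%:~R).
    rewrite -rmorphB /= Eq rmorphM /= (_ : ((p ^ v)%:Z)%:~R = (p%:R : algC) ^+ v); last first.
      by rewrite -natrX.
    by apply: (id_M HI (OK_int D q)); apply: Ipow_exp.
  have H2 : ideal_pow D P v (alpha ^+ s * (1 - B) * E) by rewrite -Hid; apply: (id_M HI abOK).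
  have H3 : ideal_pow D P v ((1 - B) * E).
    have -> : (1 - B) * E = (- beta) ^+ s * (alpha ^+ s * (1 - B) * E).
      by rewrite !mulrA HunitA mul1r.
    exact: (id_M HI nbOK).
  have HE : ideal_pow D P v E.
    exact: (invmod_cancel HI EOK (invmod_lift v HP BOK inv_B) H3).
  have HEP : P E by apply: (Ipow_P HP Hv HE).
  have nPz : ~ P (1 - z).
    move=> Hz; apply: nPab.
    have -> : alpha - beta = alpha * (1 - z) - (x 1%N)%:~R * (1 - z) + E by rewrite /E; ring.
    apply: (id_D HP) => //; apply: (id_B HP); [exact: (id_M HP aOK) | exact: (id_M HP X1OK)].
  have [w wOK Hw] := invmod_lift v HP zzOK (ZA_inv' _ (ZA_sub (ZA_1 _) zZA) nPz).
  exists w; split => //; split; first by rewrite mulrC.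
  have -> : (x 1%N)%:~R - (beta - alpha * z) * w = - ((x 1%N)%:~R * (w * (1 - z) - 1)) + w * E.
    by rewrite /E; ring.
  apply: (id_D HI); [apply: (id_N HI); exact: (id_M HI X1OK) | exact: (id_M HI wOK)].
- move=> [w [wOK [H1 H2]]].
  have HE : ideal_pow D P v E.
    have -> : E = (1 - z) * ((x 1%N)%:~R - (beta - alpha * z) * w) + (beta - alpha * z) * ((1 - z) * w - 1).
      by rewrite /E; ring.
    by apply: (id_D HI); apply: (id_M HI).
  have H3 : ideal_pow D P v ((alpha - beta) * ((x s)%:~R - (x (s + k.*2)%N)%:~R)).
    by rewrite Hid; apply: (id_M HI) => //; apply: OK_mul.
  have H4 := invmod_cancel HI (OK_sub (OK_int D _) (OK_int D _)) (invmod_lift v HP abOK inv_ab) H3.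
  rewrite -rmorphB in H4.
  rewrite eqz_mod_dvd; exact: (Ipow_int Ha ra rb nab pp npD HPI Hpp H4).
Qed.
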